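(* Let $R$ be a ring and let $S$ be a non-empty subset of $R$. For an ideal $\mathfrak{b}$ of $R$ write $(S+\mathfrak{b})/\mathfrak{b}$ for the image of $S$ in $R/\mathfrak{b}$. \begin{enumerate} \item If there exists an ideal $\mathfrak{b}$ of $R$ such that $(S+\mathfrak{b})/\mathfrak{b}\subseteq \mathcal{C}_{R/\mathfrak{b}}$, then there is a least ideal $\mathfrak{a}(S)$ of $R$ (with respect to inclusion) with this property. \item If there exists an ideal $\mathfrak{b}$ of $R$ such that $(S+\mathfrak{b})/\mathfrak{b}\subseteq {}'\mathcal{C}_{R/\mathfrak{b}}$, then there is a least ideal ${}'\mathfrak{a}(S)$ of $R$ with this property, and ${}'\mathfrak{a}(S)\subseteq \mathfrak{a}(S)$. \item If there exists an ideal $\mathfrak{b}$ of $R$ such that $(S+\mathfrak{b})/\mathfrak{b}\subseteq \mathcal{C}'_{R/\mathfrak{b}}$, then there is a least ideal $\mathfrak{a}'(S)$ of $R$ with this property, and $\mathfrak{a}'(S)\subseteq \mathfrak{a}(S)$. \end{enumerate}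
   Context: All rings are associative with $1$. For a ring $A$: ${}'\mathcal{C}_A=\{r\in A: xr=0\Rightarrow x=0 \text{ for } x\in A\}$ (left regular elements), $\mathcal{C}'_A=\{r\in A: rx=0\Rightarrow x=0\}$ (right regular elements), and $\mathcal{C}_A={}'\mathcal{C}_A\cap\mathcal{C}'_A$ (regular elements). *)

(* Defs.v *)
From HB Require Import structures.
From mathcomp Require Import all_boot all_order all_algebra.
Set Implicit Arguments. Unset Strict Implicit. Unset Printing Implicit Defensive.
Import GRing.Theory.
Local Open Scope ring_scope.

Definition is_ideal (R : pzRingType) (b : R -> Prop) : Prop :=
  [/\ b 0,
      (forall x y, b x -> b y -> b (x - y)),
      (forall a x, b x -> b (a * x)) &
      (forall a x, b x -> b (x * a))].

Definition subset_of (R : pzRingType) (a b : R -> Prop) : Prop :=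
  forall x, a x -> b x.

(* The class of r + b in R/b is left regular ('C_{R/b}):
   for every class x + b, (x + b)(r + b) = 0 + b  implies  x + b = 0 + b,
   i.e. x r \in b -> x \in b. *)
Definition lreg_mod (R : pzRingType) (b : R -> Prop) (r : R) : Prop :=
  forall x, b (x * r) -> b x.

Definition rreg_mod (R : pzRingType) (b : R -> Prop) (r : R) : Prop :=
  forall x, b (r * x) -> b x.

Definition reg_mod (R : pzRingType) (b : R -> Prop) (r : R) : Prop :=
  lreg_mod b r /\ rreg_mod b r.

(* (S + b)/b \subseteq 'C_{R/b}, C'_{R/b}, C_{R/b} respectively. *)
Definition img_lreg (R : pzRingType) (S b : R -> Prop) : Prop :=
  forall s, S s -> lreg_mod b s.
Definition img_rreg (R : pzRingType) (S b : R -> Prop) : Prop :=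
  forall s, S s -> rreg_mod b s.
Definition img_reg (R : pzRingType) (S b : R -> Prop) : Prop :=
  forall s, S s -> reg_mod b s.

Definition least_ideal (R : pzRingType) (P : (R -> Prop) -> Prop)
    (a : R -> Prop) : Prop :=
  [/\ is_ideal a, P a &
      forall b, is_ideal b -> P b -> subset_of a b].

(* Main.v *)
Require Import Defs.
From mathcomp Require Import all_boot all_order all_algebra.

Section Aux.
Variable R : pzRingType.

Definition inter (F : (R -> Prop) -> Prop) : R -> Prop :=
  fun x => forall b, F b -> b x.

Lemma inter_ideal (F : (R -> Prop) -> Prop) :
  (forall b, F b -> is_ideal b) -> is_ideal (inter F).
Proof.
move=> H; split.
- by move=> b /H [].
- by move=> x y hx hy b Fb; have [_ h _ _] := H b Fb; apply: h; [apply: hx|apply: hy].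
- by move=> a x hx b Fb; have [_ _ h _] := H b Fb; apply: h; apply: hx.
- by move=> a x hx b Fb; have [_ _ _ h] := H b Fb; apply: h; apply: hx.
Qed.

Lemma least_gen (S : R -> Prop) (Q : (R -> Prop) -> R -> Prop) :
  (forall F s, (forall b, F b -> Q b s) -> Q (inter F) s) ->
  exists a, least_ideal (fun b => forall s, S s -> Q b s) a.
Proof.
move=> HQ.
set F := fun b => is_ideal b /\ (forall s, S s -> Q b s).
exists (inter F); split.
- by apply: inter_ideal => b [].
- by move=> s Ss; apply: HQ => b [_ h]; apply: h.
- by move=> b Ib Pb x hx; apply: hx.
Qed.

Lemma lreg_inter F s : (forall b : R -> Prop, F b -> lreg_mod b s) -> lreg_mod (inter F) s.
Proof. by move=> H x hx b Fb; apply: (H b Fb); apply: hx. Qed.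

Lemma rreg_inter F s : (forall b : R -> Prop, F b -> rreg_mod b s) -> rreg_mod (inter F) s.
Proof. by move=> H x hx b Fb; apply: (H b Fb); apply: hx. Qed.

End Aux.

Theorem proposition1p1 (R : pzRingType) (S : R -> Prop) (S_ne : exists s, S s) :
  [/\ ((exists b, is_ideal b /\ img_reg S b) ->
         exists a, least_ideal (img_reg S) a),
      ((exists b, is_ideal b /\ img_lreg S b) ->
         exists la, least_ideal (img_lreg S) la) /\
      (forall la a, least_ideal (img_lreg S) la ->
         least_ideal (img_reg S) a -> subset_of la a) &
      ((exists b, is_ideal b /\ img_rreg S b) ->
         exists ra, least_ideal (img_rreg S) ra) /\
      (forall ra a, least_ideal (img_rreg S) ra ->
         least_ideal (img_reg S) a -> subset_of ra a)].
Proof.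
split.
- move=> _; apply: (@least_gen R S (fun b s => reg_mod b s)) => F s H; split.
  + by apply: lreg_inter => b Fb; case: (H b Fb).
  + by apply: rreg_inter => b Fb; case: (H b Fb).
- split.
  + move=> _; apply: (@least_gen R S (fun b s => lreg_mod b s)) => F s H.
    exact: lreg_inter.
  + move=> la a [_ _ Hla] [Ia Pa _]; apply: Hla => // s Ss; by case: (Pa s Ss).
- split.
  + move=> _; apply: (@least_gen R S (fun b s => rreg_mod b s)) => F s H.
    exact: rreg_inter.
  + move=> ra a [_ _ Hra] [Ia Pa _]; apply: Hra => // s Ss; by case: (Pa s Ss).
Qed.
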